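(* Let $\alpha=2\sqrt7-4$. If $W$ is a balanced tetrahedral erasure channel with $Q(W)\ge\alpha$, then $Q(W^{s})\ge\alpha$ and $Q(W^{p})\ge\alpha$.
   Context: $\mathrm{TEC}(p,q,r,s,t)$ denotes a tetrahedral erasure channel with parameters $p,q,r,s,t\ge0$ summing to $1$. Its entropy is $H=\frac{q+r+s}{2}+t$, its edge mass is $E=q+r+s$, and its Quetelet index is $Q=E/(H(1-H))$ (defined when $0<H<1$). It is balanced if $q=r=s$. For $W=\mathrm{TEC}(p,q,r,s,t)$, the serial child is $W^{s}=\mathrm{TEC}(p^2,\ ps+sq+qp,\ pq+qr+rp,\ pr+rs+sp,\ 1-\text{(sum of the other four)})$ and the parallel child is $W^{p}=\mathrm{TEC}(1-\text{(sum of the other four)},\ ts+sq+qt,\ tq+qr+rt,\ tr+rs+st,\ t^2)$. (For a balanced $W$ with $H(W)=x$, $E(W)=y$ one has $H(W^{p})=x^2-y^2/12$, $E(W^{p})=2xy-2y^2/3$, $H(W^{s})=2x-x^2+y^2/12$, $E(W^{s})=2y-2xy-2y^2/3$.) *)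

(* Defs.v *)
From Stdlib Require Import Reals.
Open Scope R_scope.

Record TEC : Type := mkTEC { tp : R; tq : R; tr : R; ts : R; tt : R }.

Definition valid (W : TEC) : Prop :=
  0 <= tp W /\ 0 <= tq W /\ 0 <= tr W /\ 0 <= ts W /\ 0 <= tt W /\
  tp W + tq W + tr W + ts W + tt W = 1.

Definition balanced (W : TEC) : Prop := tq W = tr W /\ tr W = ts W.

Definition entropy (W : TEC) : R := (tq W + tr W + ts W) / 2 + tt W.
Definition edge_mass (W : TEC) : R := tq W + tr W + ts W.

(* Quetelet index; only meaningful when 0 < H < 1. *)
Definition quetelet (W : TEC) : R :=
  edge_mass W / (entropy W * (1 - entropy W)).

(* "Q(W) >= a", including that Q(W) is defined (0 < H(W) < 1). *)
Definition Q_ge (W : TEC) (a : R) : Prop :=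
  0 < entropy W < 1 /\ a <= quetelet W.

Definition serial_child (W : TEC) : TEC :=
  let p := tp W in let q := tq W in let r := tr W in let s := ts W in
  let p' := p * p in
  let q' := p * s + s * q + q * p in
  let r' := p * q + q * r + r * p in
  let s' := p * r + r * s + s * p in
  mkTEC p' q' r' s' (1 - (p' + q' + r' + s')).

Definition parallel_child (W : TEC) : TEC :=
  let q := tq W in let r := tr W in let s := ts W in let t := tt W in
  let q' := t * s + s * q + q * t in
  let r' := t * q + q * r + r * t in
  let s' := t * r + r * s + s * t in
  let t' := t * t in
  mkTEC (1 - (q' + r' + s' + t')) q' r' s' t'.

Definition alpha : R := 2 * sqrt 7 - 4.

(* Main.v *)
Require Import Defs.
From Stdlib Require Import Reals Lra Psatz.
Open Scope R_scope.

Definition fy (a x y : R) : R :=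
  2*x*y - 2/3*y^2 - a*(x^2 - y^2/12)*(1 - (x^2 - y^2/12)).

Lemma alpha_rel : alpha^2 + 8*alpha - 12 = 0.
Proof.
  unfold alpha. assert (H := sqrt_sqrt 7 ltac:(lra)).
  replace ((2 * sqrt 7 - 4) ^ 2) with (4 * (sqrt 7 * sqrt 7) - 16 * sqrt 7 + 16) by ring.
  rewrite H. ring.
Qed.

Lemma alpha_bounds : 1.2915 <= alpha <= 1.2916.
Proof.
  unfold alpha.
  assert (h1 : sqrt (2.64575 * 2.64575) <= sqrt 7) by (apply sqrt_le_1_alt; lra).
  assert (h2 : sqrt 7 <= sqrt (2.6458 * 2.6458)) by (apply sqrt_le_1_alt; lra).
  rewrite sqrt_square in h1 by lra. rewrite sqrt_square in h2 by lra. lra.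
Qed.

Lemma f_lo (a x : R) : a^2 + 8*a - 12 = 0 -> 1.2915 <= a <= 1.2916 ->
  0 <= x <= 1 -> 0 <= fy a x (a*x*(1-x)).
Proof.
  intros Ha Hb Hx.
  set (e := 1 - x).
  assert (Hx' : x = 1 - e) by (unfold e; ring).
  assert (He : 0 <= e <= 1) by (unfold e; lra).
  clearbody e. subst x.
  set (h := (-32 + 76*a/3) + e*(295*a/9 - 128/3) + e^2*(2-e)*(176/3 - 409*a/9)).
  assert (Hid : fy a (1-e) (a*(1-e)*e) - (1-e)^2*e^3*h
     = (a^2 + 8*a - 12) * ((-8/3)*a^0*e^3 + (16/9)*a^0*e^4 + (128/9)*a^0*e^5 + (-28/1)*a^0*e^6 + (176/9)*a^0*e^7 + (-44/9)*a^0*e^8 + (-1/12)*a^1*e^2 + (1/2)*a^1*e^3 + (-7/18)*a^1*e^4 + (-13/9)*a^1*e^5 + (3/1)*a^1*e^6 + (-19/9)*a^1*e^7 + (19/36)*a^1*e^8 + (-1/18)*a^2*e^4 + (2/9)*a^2*e^5 + (-1/3)*a^2*e^6 + (2/9)*a^2*e^7 + (-1/18)*a^2*e^8 + (1/144)*a^3*e^4 + (-1/36)*a^3*e^5 + (1/24)*a^3*e^6 + (-1/36)*a^3*e^7 + (1/144)*a^3*e^8)) by (unfold fy, h; field).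
  rewrite Ha, Rmult_0_l in Hid.
  assert (Hu : 0 <= e^2*(2-e) <= 1).
  { split. apply Rmult_le_pos; [apply pow_le|]; lra.
    assert (0 <= (1-e)*(1+e-e^2)) by (apply Rmult_le_pos; nra). nra. }
  assert (Hh : 0 <= h).
  { unfold h. assert (0 <= (295*a/9 - 128/3 + 0.34) * e) by (apply Rmult_le_pos; lra).
    assert (0 <= (176/3 - 409*a/9 + 0.03) * (e^2*(2-e))) by (apply Rmult_le_pos; lra).
    lra. }
  assert (0 <= (1-e)^2*e^3*h).
  { apply Rmult_le_pos; [apply Rmult_le_pos|]; auto; apply pow_le; lra. }
  lra.
Qed.

Lemma f_R (a x : R) : 1.2915 <= a <= 1.2916 ->
  1/2 <= x <= 1 -> 0 <= fy a x (2*(1-x)).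
Proof.
  intros Hb Hx.
  set (e := 1 - x).
  assert (Hx' : x = 1 - e) by (unfold e; ring).
  assert (He : 0 <= e <= 1/2) by (unfold e; lra).
  clearbody e. subst x.
  assert (Hid : fy a (1-e) (2*e) = e * (4 - 2*a + e*(14*a/3 - 20/3) + a*e^2*(-8/3 + 4*e/9)))
    by (unfold fy; field).
  rewrite Hid. apply Rmult_le_pos; [lra|].
  assert (0 <= a*e^2*e) by (apply Rmult_le_pos; [apply Rmult_le_pos; [lra|apply pow_le]|]; lra).
  assert (e^2 <= 1/4) by (simpl; nra).
  assert (a*e^2 <= a/4) by (apply Rle_trans with (a*(1/4)); [apply Rmult_le_compat_l; lra | lra]).
  assert (0 <= (20/3 - 14*a/3)*(1/2 - e)) by (apply Rmult_le_pos; lra).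
  nra.
Qed.

Lemma f_L (a x : R) : 1.2915 <= a <= 1.2916 ->
  0 <= x <= 1/2 -> 0 <= fy a x (2*x).
Proof.
  intros Hb Hx.
  assert (Hid : fy a x (2*x) = x^2 * (4/3 - 2*a/3 + 4*a*x^2/9)) by (unfold fy; field).
  rewrite Hid. apply Rmult_le_pos; [apply pow_le; lra|].
  assert (0 <= a*x^2) by (apply Rmult_le_pos; [lra|apply pow_le; lra]). lra.
Qed.

Lemma conc (c0 c1 c2 c4 L y U : R) :
  L <= y <= U -> L < U ->
  c2 + c4*(L^2+y^2+U^2+L*y+L*U+y*U) <= 0 ->
  0 <= c0 + c1*L + c2*L^2 + c4*L^4 ->
  0 <= c0 + c1*U + c2*U^2 + c4*U^4 ->
  0 <= c0 + c1*y + c2*y^2 + c4*y^4.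
Proof.
  intros Hy HLU Hc HL HU.
  assert (Hid : (U-L)*(c0 + c1*y + c2*y^2 + c4*y^4) =
    (U-y)*(c0 + c1*L + c2*L^2 + c4*L^4) + (y-L)*(c0 + c1*U + c2*U^2 + c4*U^4)
    - (y-L)*(U-y)*(U-L)*(c2 + c4*(L^2+y^2+U^2+L*y+L*U+y*U))) by ring.
  assert (0 <= (U-y)*(c0 + c1*L + c2*L^2 + c4*L^4)) by (apply Rmult_le_pos; lra).
  assert (0 <= (y-L)*(c0 + c1*U + c2*U^2 + c4*U^4)) by (apply Rmult_le_pos; lra).
  assert (0 <= (y-L)*(U-y)*(U-L)*(-(c2 + c4*(L^2+y^2+U^2+L*y+L*U+y*U)))).
  { repeat apply Rmult_le_pos; lra. }
  assert (0 <= (U-L)*(c0 + c1*y + c2*y^2 + c4*y^4)) by lra.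
  destruct (Rle_lt_dec 0 (c0 + c1*y + c2*y^2 + c4*y^4)); auto.
  assert ((U-L)*(c0 + c1*y + c2*y^2 + c4*y^4) < 0) by (apply Rmult_pos_neg; lra). lra.
Qed.

Lemma fy_poly (a x y : R) : fy a x y =
  (-a*x^2*(1-x^2)) + (2*x)*y + (-2/3 - a*(2*x^2-1)/12)*y^2 + (a/144)*y^4.
Proof. unfold fy; field. Qed.

Lemma h2_le (L y U : R) : 0 <= L <= 1 -> 0 <= y <= 1 -> 0 <= U <= 1 ->
  L^2+y^2+U^2+L*y+L*U+y*U <= 6.
Proof.
  intros. assert (L*L <= 1) by nra. assert (y*y <= 1) by nra. assert (U*U <= 1) by nra.
  assert (L*y <= 1) by nra. assert (L*U <= 1) by nra. assert (y*U <= 1) by nra.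
  simpl. nra.
Qed.

Lemma core (a x y : R) : a^2 + 8*a - 12 = 0 -> 1.2915 <= a <= 1.2916 ->
  0 < x < 1 -> y <= 2*x -> y <= 2*(1-x) -> a*(x*(1-x)) <= y ->
  0 <= fy a x y.
Proof.
  intros Ha Hb Hx H1 H2 H3.
  assert (Hlo := f_lo a x Ha Hb ltac:(lra)).
  rewrite fy_poly in Hlo |- *.
  assert (Hx2 : 0 <= x^2 <= 1) by (split; [apply pow_le; lra | simpl; nra]).
  assert (HL0 : 0 <= a*x*(1-x)) by (apply Rmult_le_pos; [apply Rmult_le_pos|]; lra).
  destruct (Rle_lt_dec x (1/2)).
  - assert (HU := f_L a x Hb ltac:(lra)). rewrite fy_poly in HU.
    apply (conc _ _ _ _ (a*x*(1-x)) y (2*x)); auto.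
    + split; lra.
    + nra.
    + assert (h := h2_le (a*x*(1-x)) y (2*x) ltac:(nra) ltac:(lra) ltac:(lra)).
      nra.
  - assert (HU := f_R a x Hb ltac:(lra)). rewrite fy_poly in HU.
    apply (conc _ _ _ _ (a*x*(1-x)) y (2*(1-x))); auto.
    + split; lra.
    + nra.
    + assert (h := h2_le (a*x*(1-x)) y (2*(1-x)) ltac:(nra) ltac:(lra) ltac:(lra)).
      nra.
Qed.

Lemma le_div (a N D : R) : 0 < D -> a*D <= N -> a <= N/D.
Proof.
  intros HD H. apply Rmult_le_reg_r with D; auto.
  unfold Rdiv. rewrite Rmult_assoc, Rinv_l by lra. lra.
Qed.

Lemma div_le (a N D : R) : 0 < D -> a <= N/D -> a*D <= N.
Proof.
  intros HD H. apply Rmult_le_compat_r with (r := D) in H; [|lra].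
  unfold Rdiv in H. rewrite Rmult_assoc, Rinv_l in H by lra. lra.
Qed.

Lemma child (x y : R) : 0 < x < 1 -> 0 <= y -> y <= 2*x -> y <= 2*(1-x) ->
  alpha <= y/(x*(1-x)) ->
  (0 < x^2 - y^2/12 < 1) /\
  alpha <= (2*x*y - 2/3*y^2) / ((x^2 - y^2/12)*(1 - (x^2 - y^2/12))).
Proof.
  intros Hx Hy H1 H2 HQ.
  assert (Hb := alpha_bounds). assert (Ha := alpha_rel).
  assert (HD : 0 < x*(1-x)) by (apply Rmult_lt_0_compat; lra).
  apply div_le in HQ; auto.
  assert (Hf := core alpha x y Ha Hb Hx H1 H2 HQ).
  assert (y*y <= 4*(x*x)) by nra.
  assert (Hx' : 0 < x^2 - y^2/12 < 1) by (simpl; split; nra).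
  split; auto.
  apply le_div. apply Rmult_lt_0_compat; lra.
  unfold fy in Hf. lra.
Qed.

Theorem mainTheorem5 (W : TEC) :
  valid W -> balanced W -> Q_ge W alpha ->
  Q_ge (serial_child W) alpha /\ Q_ge (parallel_child W) alpha.
Proof.
  destruct W as [p q r s t].
  unfold valid, balanced, Q_ge, quetelet, serial_child, parallel_child, entropy, edge_mass; simpl.
  intros [Hp [Hq [Hr [Hs [Ht Hsum]]]]] [Hqr Hrs] [HH HQ].
  subst r. subst s.
  set (x := (q + q + q) / 2 + t) in *.
  set (y := q + q + q) in *.
  assert (Hy : 0 <= y) by (unfold y; lra).
  assert (H1 : y <= 2*x) by (unfold x, y; lra).
  assert (H2 : y <= 2*(1-x)) by (unfold x, y; lra).
  assert (Hp' : p = 1 - x - y/2) by (unfold x, y; lra).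
  assert (Ht' : t = x - y/2) by (unfold x, y; lra).
  split.
  - assert (HQ' : alpha <= y / ((1-x)*(1-(1-x)))).
    { replace ((1-x)*(1-(1-x))) with (x*(1-x)) by ring. auto. }
    destruct (child (1-x) y ltac:(lra) Hy ltac:(lra) ltac:(lra) HQ') as [A B].
    assert (E1 : (p * q + q * q + q * p + (p * q + q * q + q * p) + (p * q + q * q + q * p)) / 2 +
       (1 - (p * p + (p * q + q * q + q * p) + (p * q + q * q + q * p) + (p * q + q * q + q * p)))
       = 1 - ((1-x)^2 - y^2/12)).
    { rewrite Hp'. unfold y. field. }
    assert (E2 : p * q + q * q + q * p + (p * q + q * q + q * p) + (p * q + q * q + q * p)
       = 2*(1-x)*y - 2/3*y^2).
    { rewrite Hp'. unfold y. field. }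
    rewrite E1, E2. split; [lra|].
    replace ((1 - ((1 - x) ^ 2 - y ^ 2 / 12)) * (1 - (1 - ((1 - x) ^ 2 - y ^ 2 / 12))))
      with (((1 - x) ^ 2 - y ^ 2 / 12) * (1 - ((1 - x) ^ 2 - y ^ 2 / 12))) by ring.
    auto.
  - destruct (child x y HH Hy H1 H2 HQ) as [A B].
    assert (E1 : (t * q + q * q + q * t + (t * q + q * q + q * t) + (t * q + q * q + q * t)) / 2 + t * t
       = x^2 - y^2/12).
    { rewrite Ht'. unfold y. field. }
    assert (E2 : t * q + q * q + q * t + (t * q + q * q + q * t) + (t * q + q * q + q * t)
       = 2*x*y - 2/3*y^2).
    { rewrite Ht'. unfold y. field. }
    rewrite E1, E2. auto.
Qed.
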